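(* Assume $\langle f\rangle_X=0$ and that $\psi$ satisfies (A1) and (A2). Then a function $u^H\in U^H_\#$ solves the HQC problem if and only if \[ \langle\psi^0_{\rm coll}Du^H,Dv^H\rangle_X=\langle f,v^H\rangle_X\quad\text{for all }v^H\in U^H_\#, \] where $\psi^0_{\rm coll}(X_i)=\psi^0(X_{i_k^{\rm coll}})$ for $X_i\in S_k$.
   Context: Let $\epsilon>0$, $N,p$ positive integers with normalization $N\epsilon=1$; $X_i=\epsilon i$, $Y_j=j$. $U^N_{\rm per}(\epsilon\mathbb Z)$: functions $u:\epsilon\mathbb Z\to\mathbb R$ with $u(X_{i+N})=u(X_i)$; $U^N_\#(\epsilon\mathbb Z)$: those with $\langle u\rangle_X:=\frac1N\sum_{i=1}^Nu(X_i)=0$. $\langle u,v\rangle_X=\frac1N\sum_{i=1}^Nu(X_i)v(X_i)$, $Du(X_i)=(u(X_{i+1})-u(X_i))/\epsilon$. $U^p_\#(\epsilon\mathbb Z)$: $p$-periodic functions on $\epsilon\mathbb Z$ with $\sum_{i=1}^pw(X_i)=0$. Two-scale functions $g:\epsilon\mathbb Z\times\mathbb Z\to\mathbb R$ satisfy $g(X_{i+N},Y_j)=g(X_i,Y_j)=g(X_i,Y_{j+p})$; $D_Xg(X_i,Y_j)=(g(X_{i+1},Y_j)-g(X_i,Y_j))/\epsilon$, $\|g\|_{L^\infty(N,p)}=\max_{1\le i\le N,1\le j\le p}|g|$. $\psi$ is a two-scale function with (A1) $0<c_\psi\le\psi\le C_\psi$ and (A2) $\|D_X\psi\|_{L^\infty(N,p)}\le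 C'_\psi$; $\psi^0(X_i)=(\frac1p\sum_{j=1}^p1/\psi(X_i,Y_j))^{-1}$. $f\in U^N_{\rm per}(\epsilon\mathbb Z)$. HQC method: indices $1=i_1<\dots<i_K\le N$, $i_{K+1}=N+1$, $S_k=\{X_i:i_k\le i<i_{k+1}\}$, $H_k=\epsilon(i_{k+1}-i_k)$. $U^H_{\rm per}$: $v\in U^N_{\rm per}(\epsilon\mathbb Z)$ affine on each $\{X_i:i_k\le i\le i_{k+1}\}$; $U^H_\#=U^H_{\rm per}\cap U^N_\#(\epsilon\mathbb Z)$. Sampling domains $S_k^{\rm rep}=\{X_i:i_k^{\rm rep}\le i<i_k^{\rm rep}+p\}\subset S_k$, collocation indices with $X_{i_k^{\rm coll}}\in S_k^{\rm rep}$, $\psi^\epsilon_{{\rm coll},k}(X_i)=\psi(X_{i_k^{\rm coll}},X_i/\epsilon)$, $\langle a,b\rangle_{S_k^{\rm rep}}=\frac1p\sum_{X_i\in S_k^{\rm rep}}a(X_i)b(X_i)$. For $v^H\in U^H_{\rm per}$ let $\ell_k$ be the affine function on $\epsilon\mathbb Z$ equal to $v^H$ on $S_k$; $\mathcal R_k(v^H)=\ell_k+w$ with $w\in U^p_\#(\epsilon\mathbb Z)$ such that $\langle\psi^\epsilon_{{\rm coll},k}D(\ell_k+w),Ds\rangle_{S_k^{\rm rep}}=0$ for all $s\in U^p_\#(\epsilon\mathbb Z)$. HQC problem: $u^H\in U^H_\#$ with $\sum_{k=1}^KH_k\langle\psi^\epsilon_{{\rm coll},k}D\mathcal R_k(u^H),D\mathcal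 R_k(v^H)\rangle_{S_k^{\rm rep}}=\langle f,v^H\rangle_X$ for all $v^H\in U^H_\#$. *)

(* Defs.v *)
From HB Require Import structures.
From mathcomp Require Import all_boot all_order all_algebra.
From mathcomp Require Import reals.
From Stdlib Require Import ClassicalEpsilon.

Set Implicit Arguments.
Unset Strict Implicit.
Unset Printing Implicit Defensive.
Import Order.TTheory GRing.Theory Num.Theory.
Local Open Scope ring_scope.

(* Grid functions: u : int -> R, where  u i  stands for u(X_i), X_i = eps*i,
   and eps = 1/N (normalization N * eps = 1).
   Two-scale functions: g : int -> int -> R, g i j stands for g(X_i, Y_j). *)

Definition eps_of (R : realType) (N : nat) : R := (N%:R)^-1.

Definition periodic (R : realType) (N : nat) (u : int -> R) : Prop :=
  forall i : int, u (i + N%:Z) = u i.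

Definition mean_X (R : realType) (N : nat) (u : int -> R) : R :=
  (N%:R)^-1 * \sum_(1 <= i < N.+1) u i%:Z.

Definition inner_X (R : realType) (N : nat) (u v : int -> R) : R :=
  (N%:R)^-1 * \sum_(1 <= i < N.+1) u i%:Z * v i%:Z.

Definition U_per (R : realType) (N : nat) (u : int -> R) : Prop := periodic N u.
Definition U_sharp (R : realType) (N : nat) (u : int -> R) : Prop :=
  periodic N u /\ mean_X N u = 0.

Definition Dd (R : realType) (N : nat) (u : int -> R) : int -> R :=
  fun i => (u (i + 1) - u i) / eps_of R N.

Definition Up_sharp (R : realType) (p : nat) (w : int -> R) : Prop :=
  periodic p w /\ \sum_(1 <= i < p.+1) w i%:Z = 0.

Definition two_scale (R : realType) (N p : nat) (g : int -> int -> R) : Prop :=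
  forall i j : int, g (i + N%:Z) j = g i j /\ g i (j + p%:Z) = g i j.

Definition DX (R : realType) (N : nat) (g : int -> int -> R) : int -> int -> R :=
  fun i j => (g (i + 1) j - g i j) / eps_of R N.

Definition psi0 (R : realType) (p : nat) (psi : int -> int -> R) : int -> R :=
  fun i => ((p%:R)^-1 * \sum_(1 <= j < p.+1) (psi i j%:Z)^-1)^-1.

Definition hqc_indices (N K : nat) (idx : nat -> nat) : Prop :=
  [/\ (1 <= K)%N, idx 1%N = 1%N,
      (forall k, (1 <= k < K)%N -> (idx k < idx k.+1)%N),
      (idx K <= N)%N & idx K.+1 = N.+1].

Definition Hk (R : realType) (N : nat) (idx : nat -> nat) (k : nat) : R :=
  eps_of R N * (idx k.+1 - idx k)%N%:R.

Definition UH_per (R : realType) (N K : nat) (idx : nat -> nat) (v : int -> R) : Prop :=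
  periodic N v /\
  forall k, (1 <= k <= K)%N ->
    exists a b : R, forall i : int,
      ((idx k)%:Z <= i <= (idx k.+1)%:Z)%R -> v i = a + b * i%:~R.

Definition UH_sharp (R : realType) (N K : nat) (idx : nat -> nat) (v : int -> R) : Prop :=
  UH_per N K idx v /\ mean_X N v = 0.

(* sampling domains S_k^rep = {X_i : rep k <= i < rep k + p} subset of S_k *)
Definition rep_ok (p K : nat) (idx rep : nat -> nat) : Prop :=
  forall k, (1 <= k <= K)%N -> (idx k <= rep k)%N /\ (rep k + p <= idx k.+1)%N.

Definition coll_ok (p K : nat) (rep coll : nat -> nat) : Prop :=
  forall k, (1 <= k <= K)%N -> (rep k <= coll k < rep k + p)%N.

(* psi^eps_{coll,k}(X_i) = psi(X_{coll k}, X_i/eps) = psi(X_{coll k}, Y_i) *)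
Definition psi_coll (R : realType) (psi : int -> int -> R) (coll : nat -> nat)
  (k : nat) : int -> R := fun i => psi (coll k)%:Z i.

Definition inner_rep (R : realType) (p : nat) (rep : nat -> nat) (k : nat)
  (a b : int -> R) : R :=
  (p%:R)^-1 * \sum_(rep k <= i < rep k + p) a i%:Z * b i%:Z.

Definition ell (R : realType) (idx : nat -> nat) (k : nat) (v : int -> R) : int -> R :=
  fun i => v (idx k)%:Z
           + (v (idx k.+1)%:Z - v (idx k)%:Z) / ((idx k.+1)%:R - (idx k)%:R)
             * (i - (idx k)%:Z)%:~R.

Definition is_corrector (R : realType) (N p : nat) (psi : int -> int -> R)
  (rep coll : nat -> nat) (k : nat) (l w : int -> R) : Prop :=
  Up_sharp p w /\
  forall s : int -> R, Up_sharp p s ->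
    inner_rep p rep k (fun i => psi_coll psi coll k i * Dd N (fun j => l j + w j) i)
                      (Dd N s) = 0.

Definition corrector (R : realType) (N p : nat) (psi : int -> int -> R)
  (rep coll : nat -> nat) (k : nat) (l : int -> R) : int -> R :=
  epsilon (inhabits (fun _ : int => (0 : R)))
          (is_corrector N p psi rep coll k l).

Definition Rk (R : realType) (N p : nat) (psi : int -> int -> R)
  (idx rep coll : nat -> nat) (k : nat) (v : int -> R) : int -> R :=
  fun i => ell idx k v i + corrector N p psi rep coll k (ell idx k v) i.

Definition hqc_solves (R : realType) (N p K : nat) (idx rep coll : nat -> nat)
  (psi : int -> int -> R) (f u : int -> R) : Prop :=
  forall v : int -> R, UH_sharp N K idx v ->
    \sum_(1 <= k < K.+1)
       Hk R N idx k *
       inner_rep p rep k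
         (fun i => psi_coll psi coll k i * Dd N (Rk N p psi idx rep coll k u) i)
         (Dd N (Rk N p psi idx rep coll k v))
    = inner_X N f v.

Definition psi0_coll (R : realType) (p K : nat) (idx coll : nat -> nat)
  (psi : int -> int -> R) : int -> R :=
  fun i => \sum_(1 <= k < K.+1)
            (if ((idx k)%:Z <= i < (idx k.+1)%:Z)%R
             then psi0 p psi (coll k)%:Z else 0).

(* Main.v *)
Require Import Defs.
From HB Require Import structures.
From mathcomp Require Import all_boot all_order all_algebra.
From mathcomp Require Import reals.
From mathcomp Require Import ring lra zify.
From Stdlib Require Import ClassicalEpsilon.
Set Implicit Arguments.
Unset Strict Implicit.
Unset Printing Implicit Defensive.
Import Order.TTheory GRing.Theory Num.Theory.
Local Open Scope ring_scope.


Lemma per_nat {R : realType} (p : nat) (F : int -> R) :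
  (forall j, F (j + p%:Z) = F j) -> forall (n : nat) (j : int), F (j + n%:Z * p%:Z) = F j.
Proof.
move=> hF; elim=> [|n IH] j; first by rewrite mul0r addr0.
have -> : j + n.+1%:Z * p%:Z = (j + n%:Z * p%:Z) + p%:Z.
  by rewrite -addn1 PoszD mulrDl mul1r addrA.
by rewrite hF IH.
Qed.

Lemma per_int {R : realType} (p : nat) (F : int -> R) :
  (forall j, F (j + p%:Z) = F j) -> forall (d j : int), F (j + d * p%:Z) = F j.
Proof.
move=> hF [n|n] j; first exact: per_nat.
rewrite NegzE; set j' := j + _.
have -> : j = j' + n.+1%:Z * p%:Z by rewrite /j' mulNr addrNK.
by rewrite per_nat.
Qed.

Lemma window_shift {R : realType} (p : nat) (F : int -> R) :
  (forall j, F (j + p%:Z) = F j) -> forall r : nat,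
  \sum_(i < p) F (r + i)%N%:Z = \sum_(i < p) F i%:Z.
Proof.
move=> hF; elim=> [|r IH] //; rewrite -IH.
case: p hF {IH} => [|p] hF; first by rewrite !big_ord0.
rewrite big_ord_recr big_ord_recl /=.
rewrite addrC; congr (_ + _); last first.
  apply: eq_bigr => i _; congr F; rewrite /bump /=; lia.
by rewrite addn0 addSnnS PoszD hF.
Qed.

Lemma window_nat {R : realType} (p : nat) (F : int -> R) (r : nat) :
  \sum_(r <= i < r + p) F i%:Z = \sum_(i < p) F (r + i)%N%:Z.
Proof.
rewrite -{1}[r]add0n big_addn addKn big_mkord.
by apply: eq_bigr => i _; rewrite addnC.
Qed.

Lemma window_eq {R : realType} (p : nat) (F : int -> R) (r : nat) :
  (forall j, F (j + p%:Z) = F j) ->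
  \sum_(r <= i < r + p) F i%:Z = \sum_(1 <= i < p.+1) F i%:Z.
Proof.
move=> hF; rewrite window_nat -addn1 addnC (window_nat p F 1).
by rewrite !window_shift.
Qed.


Lemma prim_exists {R : realType} (p : nat) (a : int -> R) : (0 < p)%N ->
  (forall j, a (j + p%:Z) = a j) -> \sum_(1 <= i < p.+1) a i%:Z = 0 ->
  exists w : int -> R, [/\ (forall j, w (j + p%:Z) = w j),
     \sum_(1 <= i < p.+1) w i%:Z = 0 & forall i, w (i + 1) - w i = a i].
Proof.
move=> p0 ha hs.
pose h (i : int) := \sum_(j < `|(i %% p%:Z)%Z|%N) a j%:Z.
pose c := (p%:R)^-1 * \sum_(1 <= i < p.+1) h i%:Z.
have pz : (p%:Z != 0) by rewrite eqz_nat -lt0n.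
have hper : forall j, h (j + p%:Z) = h j by move=> j; rewrite /h modzDr.
exists (fun i => h i - c); split.
- by move=> j; rewrite hper.
- rewrite sumrB sumr_const_nat subSS subn0 /c.
  rewrite -[X in _ - X]mulr_natr mulrAC mulVf ?mul1r ?subrr //.
  by rewrite pnatr_eq0 -lt0n.
- move=> i; rewrite opprB addrA subrK.
  set m := `|(i %% p%:Z)%Z|%N.
  have hm : (i %% p%:Z)%Z = m%:Z by rewrite /m gez0_abs // modz_ge0.
  have mp : (m < p)%N.
    have := ltz_pmod i (_ : 0 < p%:Z); rewrite hm ltz_nat; apply; by rewrite ltz_nat.
  have ai : a i = a m%:Z.
    rewrite {1}(divz_eq i p%:Z) hm addrC; exact: per_int.
  have hi1 : ((i + 1) %% p%:Z)%Z = ((m.+1 %% p)%N)%:Z.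
    rewrite {1}(divz_eq i p%:Z) hm -addrA modzMDl -modz_nat; congr (_ %% _)%Z.
    by rewrite -addn1 PoszD.
  rewrite /h hi1 hm /= ai.
  have [mp1|] := ltnP m.+1 p.
    by rewrite modn_small // big_ord_recr /= addrC addKr.
  move=> pm1; have em : m.+1 = p by apply/eqP; rewrite eqn_leq pm1 mp.
  rewrite -em modnn big_ord0 sub0r.
  have : \sum_(j < p) a j%:Z = 0.
    by rewrite -[RHS]hs -(window_eq 0 ha) window_nat.
  rewrite -em big_ord_recr /= => /eqP; rewrite addr_eq0 => /eqP ->.
  by rewrite opprK.
Qed.


Lemma Dd_E {R : realType} (N : nat) (g : int -> R) i : Dd N g i = N%:R * (g (i + 1) - g i).
Proof. by rewrite /Dd /eps_of invrK mulrC. Qed.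

Lemma tele_per {R : realType} (N p : nat) (s : int -> R) (r : nat) :
  (forall j, s (j + p%:Z) = s j) ->
  \sum_(r <= i < r + p) Dd N s i%:Z = 0.
Proof.
move=> hs; under eq_bigr do rewrite Dd_E.
rewrite -mulr_sumr (telescope_sumr_eq (fun n => s n%:Z)) ?leq_addr //.
  by rewrite PoszD hs subrr mulr0.
by move=> n _; rewrite -addn1 PoszD.
Qed.

Lemma corrector_key {R : realType} (N p : nat) (psi : int -> int -> R) (rep coll : nat -> nat)
  (k : nat) (l : int -> R) (b : R) :
  (0 < N)%N -> (0 < p)%N -> (forall i j, psi i (j + p%:Z) = psi i j) ->
  (forall i j, 0 < psi i j) -> (forall i, l (i + 1) - l i = b) ->
  forall i : nat, (rep k <= i < rep k + p)%N ->
   psi_coll psi coll k i%:Z * Dd N (fun j => l j + corrector N p psi rep coll k l j) i%:Z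
   = N%:R * b * psi0 p psi (coll k)%:Z.
Proof.
move=> N0 p0 hper hpos hl.
set c := (coll k)%:Z; set q := psi0 p psi c.
set S := \sum_(1 <= j < p.+1) (psi c j%:Z)^-1.
have Spos : 0 < S.
  rewrite /S big_nat_recl // ltr_pwDl ?invr_gt0 //.
  by apply: sumr_ge0 => j _; rewrite invr_ge0 ltW.
have pR : (p%:R : R) != 0 by rewrite pnatr_eq0 -lt0n.
have qS : q * S = p%:R.
  by rewrite /q /psi0 -/S invfM invrK mulfVK // gt_eqF.
pose a j := b * q / psi c j - b.
have ha : forall j, a (j + p%:Z) = a j by move=> j; rewrite /a hper.
have hsa : \sum_(1 <= j < p.+1) a j%:Z = 0.
  rewrite /a sumrB sumr_const_nat subSS subn0 -mulr_sumr -/S -mulrA qS.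
  by rewrite mulr_natr subrr.
have [w0 [w0per w0s w0d]] := prim_exists p0 ha hsa.
have key0 : forall i, psi c i * Dd N (fun j => l j + w0 j) i = N%:R * b * q.
  move=> i; rewrite Dd_E opprD addrACA hl w0d /a.
  have hp0 : psi c i != 0 by rewrite gt_eqF.
  by field.
have cor0 : forall s : int -> R, (forall j, s (j + p%:Z) = s j) ->
   \sum_(rep k <= i < rep k + p)
     psi c i%:Z * Dd N (fun j => l j + w0 j) i%:Z * Dd N s i%:Z = 0.
  move=> s hs; under eq_bigr do rewrite key0.
  by rewrite -mulr_sumr tele_per // mulr0.
have hw0 : is_corrector N p psi rep coll k l w0.
  split; first by split.
  by move=> s [hs _]; rewrite /inner_rep /psi_coll -/c cor0 // mulr0.
set w := corrector N p psi rep coll k l.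
have hw : is_corrector N p psi rep coll k l w.
  by apply: epsilon_spec; exists w0.
case: hw => [[wper ws] hw].
pose s := fun i => w i - w0 i.
have sper : forall j, s (j + p%:Z) = s j by move=> j; rewrite /s wper w0per.
have ssum : \sum_(1 <= i < p.+1) s i%:Z = 0 by rewrite /s sumrB ws w0s subrr.
have e1 := hw s (conj sper ssum).
move: e1; rewrite /inner_rep /psi_coll -/c => /eqP; rewrite mulf_eq0 invr_eq0 (negbTE pR) /= => /eqP e1.
have e2 := cor0 s sper.
have e3 : \sum_(rep k <= i < rep k + p) psi c i%:Z * Dd N s i%:Z ^+ 2 = 0.
  have -> : \sum_(rep k <= i < rep k + p) psi c i%:Z * Dd N s i%:Z ^+ 2 =
     \sum_(rep k <= i < rep k + p) psi c i%:Z * Dd N (fun j => l j + w j) i%:Z * Dd N s i%:Z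
     - \sum_(rep k <= i < rep k + p) psi c i%:Z * Dd N (fun j => l j + w0 j) i%:Z * Dd N s i%:Z.
    rewrite -sumrB; apply: eq_bigr => i _; rewrite !Dd_E /s; ring.
  by rewrite e1 e2 subrr.
have nn : forall i : nat, predT i -> 0 <= psi c i%:Z * Dd N s i%:Z ^+ 2.
  by move=> j _; apply: mulr_ge0; [exact: ltW | exact: sqr_ge0].
have := @psumr_eq0 _ _ (index_iota (rep k) (rep k + p)) predT
   (fun i : nat => psi c i%:Z * Dd N s i%:Z ^+ 2) nn.
rewrite [X in (X == 0)](_ : _ = 0); last exact: e3.
rewrite eqxx => /esym /allP Hall.
move=> i hi; rewrite /psi_coll -/c -(key0 i%:Z); congr (_ * _).
have := Hall i; rewrite mem_index_iota hi => /(_ isT) /=.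
rewrite mulf_eq0 gt_eqF // sqrf_eq0 /= => ds.
move: ds; rewrite !Dd_E /s => /eqP ds.
apply/eqP; rewrite -subr_eq0 -[X in _ == X]ds; apply/eqP; ring.
Qed.

Lemma idx_step N K idx : hqc_indices N K idx ->
  forall k, (1 <= k <= K)%N -> (idx k < idx k.+1)%N.
Proof.
case=> K1 i1 hinc iK iK1 k /andP[k1 kK].
case: (ltnP k K) => h; first by apply: hinc; rewrite k1 h.
have -> : k = K by apply/eqP; rewrite eqn_leq kK h.
by rewrite iK1 ltnS.
Qed.

Lemma idx_mono N K idx : hqc_indices N K idx ->
  forall k1 k2, (1 <= k1)%N -> (k1 <= k2)%N -> (k2 <= K.+1)%N -> (idx k1 <= idx k2)%N.
Proof.
move=> hI k1 k2 h1; elim: k2 => [|k2 IH]; first by rewrite leqn0 => /eqP ->.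
rewrite leq_eqVlt => /orP[/eqP -> //|h12] hk2.
apply: leq_trans (IH h12 (ltnW hk2)) _; apply: ltnW; apply: (idx_step hI).
by rewrite (leq_trans h1 h12).
Qed.

Definition slope {R : realType} (idx : nat -> nat) (k : nat) (v : int -> R) : R :=
  (v (idx k.+1)%:Z - v (idx k)%:Z) / ((idx k.+1)%:R - (idx k)%:R).

Lemma ell_diff {R : realType} idx k (v : int -> R) i : ell idx k v (i + 1) - ell idx k v i = slope idx k v.
Proof.
rewrite /ell /slope. rewrite !intrB intrD. ring.
Qed.

Lemma UH_slope {R : realType} N K idx (v : int -> R) : hqc_indices N K idx -> UH_per N K idx v ->
  forall k, (1 <= k <= K)%N -> forall i : int,
  ((idx k)%:Z <= i)%R -> (i < (idx k.+1)%:Z)%R -> v (i + 1) - v i = slope idx k v.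
Proof.
move=> hI [_ hv] k hk i hi1 hi2.
have [a [b0 hab]] := hv k hk.
have st := idx_step hI hk.
have st' : ((idx k)%:Z <= (idx k.+1)%:Z)%R by rewrite lez_nat ltnW.
rewrite /slope (hab i); last by rewrite hi1 ltW.
rewrite (hab (i + 1)); last by rewrite (le_trans hi1) ?lerDl //= -ltzD1 ltrD2r.
rewrite (hab (idx k)%:Z); last by rewrite lexx.
rewrite (hab (idx k.+1)%:Z); last by rewrite lexx andbT.
have hd : ((idx k.+1)%:R - (idx k)%:R : R) != 0.
  by rewrite subr_eq0 eqr_nat gtn_eqF.
rewrite intrD.
have -> : ((idx k.+1)%:Z%:~R : R) = (idx k.+1)%:R by [].
have -> : ((idx k)%:Z%:~R : R) = (idx k)%:R by [].
by field.
Qed.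


Lemma form_k {R : realType} (N p : nat) (psi : int -> int -> R) (idx rep coll : nat -> nat) k u v :
  (0 < N)%N -> (0 < p)%N -> (forall i j, psi i (j + p%:Z) = psi i j) ->
  (forall i j, 0 < psi i j) ->
  inner_rep p rep k
    (fun i => psi_coll psi coll k i * Dd N (Rk N p psi idx rep coll k u) i)
    (Dd N (Rk N p psi idx rep coll k v))
  = N%:R ^+ 2 * slope idx k u * slope idx k v * psi0 p psi (coll k)%:Z.
Proof.
move=> N0 p0 hper hpos.
have ku := @corrector_key _ N p psi rep coll k (ell idx k u) (slope idx k u) N0 p0 hper hpos (ell_diff idx k u).
have kv := @corrector_key _ N p psi rep coll k (ell idx k v) (slope idx k v) N0 p0 hper hpos (ell_diff idx k v).
rewrite /inner_rep /Rk.
set c := (coll k)%:Z; set q := psi0 p psi c.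
set su := slope idx k u; set sv := slope idx k v.
rewrite (eq_big_nat _ _ (F2 := fun i : nat => N%:R * su * q * (N%:R * sv * q) * (psi c i%:Z)^-1)); last first.
  move=> i hi; rewrite ku //.
  have hp0 : psi c i%:Z != 0 by rewrite gt_eqF.
  have := kv i hi; rewrite /psi_coll -/c => <-.
  by rewrite /su /q; field.
rewrite -mulr_sumr (window_eq _ (F := fun j => (psi c j)^-1)); last by move=> j; rewrite hper.
set S := \sum_(1 <= j < p.+1) (psi c j%:Z)^-1.
have Spos : 0 < S.
  rewrite /S big_nat_recl // ltr_pwDl ?invr_gt0 //.
  by apply: sumr_ge0 => j _; rewrite invr_ge0 ltW.
have pR : (p%:R : R) != 0 by rewrite pnatr_eq0 -lt0n.
have Sn : S != 0 by rewrite gt_eqF.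
have -> : q = p%:R / S by rewrite /q /psi0 -/S invfM invrK.
by field; rewrite Sn pR.
Qed.



Lemma split_blocks {R : realType} N K idx (F : nat -> R) : hqc_indices N K idx -> forall m, (m <= K)%N ->
  \sum_(idx 1 <= i < idx m.+1) F i = \sum_(1 <= k < m.+1) \sum_(idx k <= i < idx k.+1) F i.
Proof.
move=> hI; elim=> [|m IH] hm.
  by rewrite big_geq // big_geq.
have h1 : (idx 1 <= idx m.+1)%N by apply: (idx_mono hI) => //; rewrite ltnW.
have h2 : (idx m.+1 <= idx m.+2)%N by apply: ltnW; apply: (idx_step hI); rewrite hm.
rewrite (@big_cat_nat _ _ _ (idx m.+1)); [|exact: h1|exact: h2].
rewrite IH; last exact: ltnW hm.
rewrite [RHS]big_nat_recr; last by [].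
reflexivity.
Qed.

Lemma psi0_coll_val {R : realType} N p K idx coll (psi : int -> int -> R) k (i : nat) :
  hqc_indices N K idx -> (1 <= k <= K)%N -> (idx k <= i < idx k.+1)%N ->
  psi0_coll p K idx coll psi i%:Z = psi0 p psi (coll k)%:Z.
Proof.
move=> hI /andP[k1 kK] /andP[hi1 hi2].
rewrite /psi0_coll (bigD1_seq k); last exact: iota_uniq.
  2: by rewrite mem_index_iota k1 ltnS.
rewrite lez_nat ltz_nat hi1 hi2 /=.
rewrite big1_seq; first exact: addr0.
move=> k' /andP[nk' hk'].
move: hk'; rewrite mem_index_iota => /andP[k'1 k'K].
rewrite lez_nat ltz_nat.
case: (ltnP k' k) => hk.
  have h : (idx k'.+1 <= idx k)%N.
    by apply: (idx_mono hI); [rewrite ltnW | exact: hk | exact: leqW].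
  have -> : (i < idx k'.+1)%N = false by rewrite ltnNge (leq_trans h hi1).
  by rewrite andbF.
have hk2 : (k < k')%N by rewrite ltn_neqAle eq_sym nk' hk.
have h : (idx k.+1 <= idx k')%N by apply: (idx_mono hI); [by [] | exact: hk2 | exact: ltnW k'K].
have -> : (idx k' <= i)%N = false by rewrite leqNgt (leq_trans hi2 h).
by [].
Qed.

Lemma form_eq {R : realType} (N p K : nat) (idx rep coll : nat -> nat) (psi : int -> int -> R) u v :
  (0 < N)%N -> (0 < p)%N -> hqc_indices N K idx ->
  (forall i j, psi i (j + p%:Z) = psi i j) -> (forall i j, 0 < psi i j) ->
  UH_per N K idx u -> UH_per N K idx v ->
  \sum_(1 <= k < K.+1)
       Hk R N idx k *
       inner_rep p rep k
         (fun i => psi_coll psi coll k i * Dd N (Rk N p psi idx rep coll k u) i)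
         (Dd N (Rk N p psi idx rep coll k v))
  = inner_X N (fun i => psi0_coll p K idx coll psi i * Dd N u i) (Dd N v).
Proof.
move=> N0 p0 hI hper hpos hu hv.
have hI' := hI; case: hI' => K1 i1 hinc iK iK1.
rewrite /inner_X.
have -> : \sum_(1 <= i < N.+1) psi0_coll p K idx coll psi i%:Z * Dd N u i%:Z * Dd N v i%:Z
  = \sum_(idx 1 <= i < idx K.+1) psi0_coll p K idx coll psi i%:Z * Dd N u i%:Z * Dd N v i%:Z.
  by rewrite i1 iK1.
rewrite (split_blocks _ hI (leqnn K)) mulr_sumr.
apply: eq_big_nat => k /andP[k1 kK].
have hk : (1 <= k <= K)%N by rewrite k1 -ltnS kK.
rewrite (form_k idx rep coll k u v N0 p0 hper hpos).
rewrite (eq_big_nat _ _ (F2 := fun _ => psi0 p psi (coll k)%:Z * (N%:R * slope idx k u) * (N%:R * slope idx k v))); last first.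
  move=> i /andP[hi1 hi2].
  have hi1' : ((idx k)%:Z <= i%:Z)%R by rewrite lez_nat.
  have hi2' : (i%:Z < (idx k.+1)%:Z)%R by rewrite ltz_nat.
  rewrite (@psi0_coll_val _ N p K idx coll psi k i hI hk); last by rewrite hi1 hi2.
  by rewrite !Dd_E (@UH_slope _ N K idx u hI hu k hk i%:Z hi1' hi2') (@UH_slope _ N K idx v hI hv k hk i%:Z hi1' hi2').
rewrite sumr_const_nat /Hk /eps_of -mulr_natr.
ring.
Qed.


Theorem lemma6p6 (R : realType) (N p K : nat) (idx rep coll : nat -> nat)
  (psi : int -> int -> R) (f : int -> R) (c_psi C_psi C'_psi : R) (u : int -> R) :
  (0 < N)%N -> (0 < p)%N ->
  hqc_indices N K idx -> rep_ok p K idx rep -> coll_ok p K rep coll ->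
  two_scale N p psi ->
  (* (A1) *)
  0 < c_psi -> (forall i j : int, c_psi <= psi i j <= C_psi) ->
  (* (A2) *)
  (forall i j : nat, (1 <= i <= N)%N -> (1 <= j <= p)%N ->
     `|DX N psi i%:Z j%:Z| <= C'_psi) ->
  U_per N f -> mean_X N f = 0 ->
  UH_sharp N K idx u ->
  (hqc_solves N p K idx rep coll psi f u <->
   forall v : int -> R, UH_sharp N K idx v ->
     inner_X N (fun i => psi0_coll p K idx coll psi i * Dd N u i) (Dd N v)
     = inner_X N f v).
Proof.
move=> N0 p0 hI _ _ h2 cpos hA1 _ _ _ [hu _].
have hper : forall i j, psi i (j + p%:Z) = psi i j by move=> i j; case: (h2 i j).
have hpos : forall i j, 0 < psi i j.
  by move=> i j; case/andP: (hA1 i j) => h _; exact: lt_le_trans cpos h.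
split=> H v hv.
  by rewrite -(form_eq rep coll N0 p0 hI hper hpos hu (proj1 hv)); exact: H.
by rewrite /hqc_solves (form_eq rep coll N0 p0 hI hper hpos hu (proj1 hv)); exact: H.
Qed.
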